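(* Fix $\alpha\in(0,1/2)$ and treatment qualities $q_1,q_3\in(0,1)$. Let $M(q_1,q_3)=\frac{2(4\alpha+1)}{3(1-q_3)}+\frac{2(3-4\alpha)}{3(1-q_1)}$ be the treatment's steady-state total user population and $Q(q_1,q_3)=\dfrac{q_3\frac{2(4\alpha+1)}{3(1-q_3)}+q_1\frac{2(3-4\alpha)}{3(1-q_1)}}{M(q_1,q_3)}$ its steady-state average recommendation quality (ARQ). Let $m^*=\frac{16(4\alpha+3)}{9}$ and $\overline{q}^*=\frac{8\alpha+3}{8\alpha+6}$ be the status quo's steady-state total population and ARQ. Then $M(q_1,q_3)>m^*$ if and only if $Q(q_1,q_3)>\overline{q}^*$, and $M(q_1,q_3)<m^*$ if and only if $Q(q_1,q_3)<\overline{q}^*$.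
   Context: Model: users have types $(x,e)\in\{1/4,3/4\}^2$; each period a unit mass of new users arrives with type distribution $F(3/4,3/4)=F(1/4,1/4)=\alpha$, $F(3/4,1/4)=F(1/4,3/4)=1/2-\alpha$. An algorithm assigns recommendation quality $q(x)\in(0,1)$ to segment $x$; a user of type $(x,e)$ churns each period with probability $(1-q(x))(1-e)$. The steady-state mass of type $(x,e)$ is $m(x,e)=F(x,e)/((1-q(x))(1-e))$; total population is $\sum_{x,e}m(x,e)$ and steady-state ARQ is $\sum_x q(x)\sum_e m(x,e)/\sum_{x,e}m(x,e)$. The status quo is $q^*(x)=x$; the treatment has $q(1/4)=q_1$, $q(3/4)=q_3$. The formulas for $M,Q,m^*,\overline{q}^*$ in the claim are these quantities written out. *)

(* Defs.v *)
From Stdlib Require Import Reals.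
Open Scope R_scope.

Definition M (alpha q1 q3 : R) : R :=
  2 * (4 * alpha + 1) / (3 * (1 - q3)) + 2 * (3 - 4 * alpha) / (3 * (1 - q1)).

Definition Q (alpha q1 q3 : R) : R :=
  (q3 * (2 * (4 * alpha + 1) / (3 * (1 - q3)))
   + q1 * (2 * (3 - 4 * alpha) / (3 * (1 - q1)))) / M alpha q1 q3.

Definition mstar (alpha : R) : R := 16 * (4 * alpha + 3) / 9.
Definition qbarstar (alpha : R) : R := (8 * alpha + 3) / (8 * alpha + 6).

(* Main.v *)
Require Import Defs.
From Stdlib Require Import Reals Lra.
Open Scope R_scope.

Theorem proposition1 (alpha q1 q3 : R) :
  0 < alpha < 1 / 2 -> 0 < q1 < 1 -> 0 < q3 < 1 ->
  (M alpha q1 q3 > mstar alpha <-> Q alpha q1 q3 > qbarstar alpha) /\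
  (M alpha q1 q3 < mstar alpha <-> Q alpha q1 q3 < qbarstar alpha).
Proof.
  intros Ha H1 H3.
  assert (Hu : 0 < / (1 - q3)) by (apply Rinv_0_lt_compat; lra).
  assert (Hv : 0 < / (1 - q1)) by (apply Rinv_0_lt_compat; lra).
  assert (HM : M alpha q1 q3 = 2 * (4 * alpha + 1) / 3 * / (1 - q3)
                 + 2 * (3 - 4 * alpha) / 3 * / (1 - q1)).
  { unfold M. field. split; lra. }
  assert (HMp : 0 < M alpha q1 q3).
  { rewrite HM. apply Rplus_lt_0_compat; apply Rmult_lt_0_compat; lra. }
  set (c := 3 / ((8 * alpha + 6) * M alpha q1 q3)).
  assert (Hc : 0 < c).
  { unfold c. apply Rdiv_lt_0_compat; [lra|]. apply Rmult_lt_0_compat; lra. }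
  assert (HQ : Q alpha q1 q3 - qbarstar alpha = c * (M alpha q1 q3 - mstar alpha)).
  { unfold c, Q, qbarstar, mstar.
    assert (HQM : q3 * (2 * (4 * alpha + 1) / (3 * (1 - q3)))
       + q1 * (2 * (3 - 4 * alpha) / (3 * (1 - q1))) = M alpha q1 q3 - 8/3).
    { unfold M. field. split; lra. }
    rewrite HQM. field. split; lra. }
  split; split; intro H.
  - assert (0 < c * (M alpha q1 q3 - mstar alpha)) by (apply Rmult_lt_0_compat; lra). lra.
  - destruct (Rle_or_lt (M alpha q1 q3) (mstar alpha)) as [Hle|]; [|lra].
    assert (c * (M alpha q1 q3 - mstar alpha) <= 0).
    { assert (0 <= c * (mstar alpha - M alpha q1 q3)) by (apply Rmult_le_pos; lra). lra. } lra.
  - assert (0 < c * (mstar alpha - M alpha q1 q3)) by (apply Rmult_lt_0_compat; lra). lra.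
  - destruct (Rle_or_lt (mstar alpha) (M alpha q1 q3)) as [Hle|]; [|lra].
    assert (0 <= c * (M alpha q1 q3 - mstar alpha)).
    { apply Rmult_le_pos; lra. } lra.
Qed.
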